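(* Let $A$ be a positively graded commutative coherent ring, let $E$ be an indecomposable injective graded $A$-module, and let $P(E)$ be the sum of annihilator ideals of non-zero homogeneous elements of $E$. Then $E$ and $E_{P(E)}$ are topologically indistinguishable in $\operatorname{inj}_{\mathrm{zg}}A$ and in $\operatorname{inj}_{\mathrm{zar}}A$; that is, for every $M\in\operatorname{gr}A$, $\mathcal Hom_A(M,E)\ne0$ if and only if $\mathcal Hom_A(M,E_{P(E)})\ne0$.
   Context: All rings are commutative with unit; $A=\bigoplus_{j\ge0}A_j$. $\operatorname{Gr}A$: graded $A$-modules, shifts $M(n)_j=M_{n+j}$; $\operatorname{gr}A$: finitely presented graded modules; $A$ coherent means every finitely generated graded ideal is finitely presented. $\mathcal Hom_A(M,N)=\bigoplus_{n\in\mathbb Z}\operatorname{Gr}A(M,N(n))$. $\operatorname{inj}A$: isomorphism classes of indecomposable injective objects of $\operatorname{Gr}A$. For a homogeneous prime $P$, $E_P$ is the injective hull of $A/P$ in $\operatorname{Gr}A$. $\operatorname{inj}_{\mathrm{zar}}A$: $\operatorname{inj}A$ with basis of opens $[M]=\{E\mid\mathcal Hom_A(M,E)=0\}$, $M\in\operatorname{gr}A$; $\operatorname{inj}_{\mathrm{zg}}A$: $\operatorname{inj}A$ with basis of opens $(M)=\{E\mid\mathcal Hom_A(M,E)\ne0\}$, $M\in\operatorname{gr}A$. *)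

(* Defs.v *)
From HB Require Import structures.
From mathcomp Require Import all_boot all_order all_algebra.
Set Implicit Arguments. Unset Strict Implicit. Unset Printing Implicit Defensive.
Import Order.TTheory GRing.Theory Num.Theory.
Local Open Scope ring_scope.

Definition graded_decomp (V : zmodType) (G : int -> pred V) : Prop :=
  (forall n, (0 : V) \in G n) /\
  (forall n (x y : V), x \in G n -> y \in G n -> x - y \in G n) /\
  (forall x : V, exists (s : seq int) (c : int -> V),
      uniq s /\ (forall n, c n \in G n) /\ x = \sum_(n <- s) c n) /\
  (forall (s : seq int) (c : int -> V), uniq s -> (forall n, c n \in G n) ->
      \sum_(n <- s) c n = 0 -> forall n, n \in s -> c n = 0).

(** A positively graded commutative ring A = (+)_{j >= 0} A_j, encoded as a
    Z-grading with A_n = 0 for n < 0. *)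
Definition pos_graded_ring (A : comNzRingType) (GA : int -> pred A) : Prop :=
  graded_decomp GA /\ (1 : A) \in GA 0 /\
  (forall i j (a b : A), a \in GA i -> b \in GA j -> a * b \in GA (i + j)) /\
  (forall n : int, n < 0 -> forall a, a \in GA n -> a = 0).

Definition graded_module (A : comNzRingType) (GA : int -> pred A)
    (V : lmodType A) (GV : int -> pred V) : Prop :=
  graded_decomp GV /\
  (forall i n (a : A) (x : V), a \in GA i -> x \in GV n -> a *: x \in GV (i + n)).

Definition homogeneous (V : zmodType) (GV : int -> pred V) (x : V) : Prop :=
  exists n, x \in GV n.

Definition graded_submodule (A : comNzRingType) (V : lmodType A)
    (GV : int -> pred V) (U : V -> Prop) : Prop :=
  U 0 /\ (forall x y, U x -> U y -> U (x - y)) /\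
  (forall (a : A) x, U x -> U (a *: x)) /\
  (forall (s : seq int) (c : int -> V), uniq s -> (forall n, c n \in GV n) ->
      U (\sum_(n <- s) c n) -> forall n, n \in s -> U (c n)).

(** f is a morphism of graded modules M -> N(d), i.e. an element of
    Gr A(M, N(d)), where N(d)_j = N_(d+j). *)
Definition graded_map_deg (A : comNzRingType) (M N : lmodType A)
    (GM : int -> pred M) (GN : int -> pred N) (d : int) (f : {linear M -> N}) : Prop :=
  forall j x, x \in GM j -> f x \in GN (d + j).

(** HomA(M,N) = (+)_n Gr A(M, N(n)) is non-zero. *)
Definition gHom_nonzero (A : comNzRingType) (M N : lmodType A)
    (GM : int -> pred M) (GN : int -> pred N) : Prop :=
  exists (d : int) (f : {linear M -> N}), graded_map_deg GM GN d f /\ exists x, f x != 0.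

Definition gr_injective (A : comNzRingType) (GA : int -> pred A)
    (E : lmodType A) (GE : int -> pred E) : Prop :=
  forall (X Y : lmodType A) (GX : int -> pred X) (GY : int -> pred Y),
    graded_module GA GX -> graded_module GA GY ->
    forall (i : {linear X -> Y}) (f : {linear X -> E}),
      graded_map_deg GX GY 0 i -> injective i -> graded_map_deg GX GE 0 f ->
      exists g : {linear Y -> E}, graded_map_deg GY GE 0 g /\ forall x, g (i x) = f x.

Definition gr_indecomposable (A : comNzRingType) (E : lmodType A) (GE : int -> pred E) : Prop :=
  (exists x : E, x != 0) /\
  forall U W : E -> Prop, graded_submodule GE U -> graded_submodule GE W ->
    (forall x, U x -> W x -> x = 0) ->
    (forall x, exists u w, U u /\ W w /\ x = u + w) ->
    (forall x, U x -> x = 0) \/ (forall x, W x -> x = 0).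

Definition P_of (A : comNzRingType) (E : lmodType A) (GE : int -> pred E) : A -> Prop :=
  fun a => exists s : seq (A * E),
    (forall p, p \in s -> p.2 != 0 /\ homogeneous GE p.2 /\ p.1 *: p.2 = 0) /\
    a = \sum_(p <- s) p.1.

(** A degree-0 graded monomorphism
    A/I -> E' is the same thing as an element e of E'_0 with Ann(e) = I
    (namely the image of 1 + I); essentiality means every non-zero graded
    submodule of E' meets its image A e non-trivially. *)
Definition gr_injective_hull_of_quotient (A : comNzRingType) (GA : int -> pred A)
    (I : A -> Prop) (E' : lmodType A) (GE' : int -> pred E') : Prop :=
  graded_module GA GE' /\ gr_injective GA GE' /\
  exists e : E', e \in GE' 0 /\ (forall a : A, a *: e = 0 <-> I a) /\
    forall U : E' -> Prop, graded_submodule GE' U -> (exists x, U x /\ x != 0) ->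
      exists a : A, a *: e != 0 /\ U (a *: e).

(** The graded submodule U of V is finitely presented (as a graded module):
    there is an exact sequence (+)_k A(-b_k) -> (+)_j A(-c_j) -> U -> 0 of
    degree-0 maps, written out elementwise: homogeneous generators g_j of
    degree c_j, and finitely many homogeneous relations r_k (of degree b_k)
    generating the module of all relations. *)
Definition gr_fin_pres_sub (A : comNzRingType) (GA : int -> pred A)
    (V : lmodType A) (GV : int -> pred V) (U : V -> Prop) : Prop :=
  exists (n : nat) (g : 'I_n -> V) (c : 'I_n -> int),
    (forall j, U (g j) /\ g j \in GV (c j)) /\
    (forall x, U x -> exists a : 'I_n -> A, x = \sum_j a j *: g j) /\
    exists (m : nat) (r : 'I_m -> 'I_n -> A) (b : 'I_m -> int),
      (forall k j, r k j \in GA (b k - c j)) /\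
      (forall k, \sum_j r k j *: g j = 0) /\
      (forall a : 'I_n -> A, \sum_j a j *: g j = 0 ->
         exists t : 'I_m -> A, forall j, a j = \sum_k t k * r k j).

Definition gr_fin_pres (A : comNzRingType) (GA : int -> pred A)
    (M : lmodType A) (GM : int -> pred M) : Prop :=
  gr_fin_pres_sub GA GM (fun _ => True).

Definition gr_coherent (A : comNzRingType) (GA : int -> pred A) : Prop :=
  forall I : A -> Prop, graded_submodule (V := A^o) GA I ->
    (exists (n : nat) (g : 'I_n -> A), (forall j, I (g j)) /\
        forall x, I x -> exists a : 'I_n -> A, x = \sum_j a j * g j) ->
    gr_fin_pres_sub (V := A^o) GA GA I.

(* Main.v *)
Require Import Defs.
From HB Require Import structures.
From mathcomp Require Import all_boot all_order all_algebra.
From mathcomp Require Import boolp zify classical_sets.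
Set Implicit Arguments. Unset Strict Implicit. Unset Printing Implicit Defensive.
Import Order.TTheory GRing.Theory Num.Theory.
Local Open Scope ring_scope.
Section Comp.
Variables (V : zmodType) (G : int -> pred V) (hG : graded_decomp G).

Lemma gd0 n : (0 : V) \in G n. Proof. by case: hG. Qed.
Lemma gdB n x y : x \in G n -> y \in G n -> x - y \in G n.
Proof. by case: hG => _ [h _]; apply: h. Qed.
Lemma gdN n x : x \in G n -> - x \in G n.
Proof. by move=> h; rewrite -sub0r; apply: gdB => //; apply: gd0. Qed.
Lemma gdD n x y : x \in G n -> y \in G n -> x + y \in G n.
Proof. by move=> hx hy; rewrite -[y]opprK; apply: gdB => //; apply: gdN. Qed.

Lemma gd_ex x : exists sc : seq int * (int -> V),
  uniq sc.1 /\ (forall n, sc.2 n \in G n) /\ x = \sum_(n <- sc.1) sc.2 n.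
Proof. by case: hG => _ [_ [h _]]; have [s [c hc]] := h x; exists (s, c). Qed.

Definition dec x := proj1_sig (cid (gd_ex x)).
Definition comp (n : int) (x : V) : V :=
  if n \in (dec x).1 then (dec x).2 n else 0.

Lemma comp_in n x : comp n x \in G n.
Proof.
rewrite /comp; case: ifP => _; last exact: gd0.
by have [_ [h _]] := proj2_sig (cid (gd_ex x)).
Qed.

Lemma sum_mask (s t : seq int) (c : int -> V) : uniq s -> uniq t -> {subset s <= t} ->
  \sum_(n <- t) (if n \in s then c n else 0) = \sum_(n <- s) c n.
Proof.
move=> us ut st; rewrite -big_mkcond /= -big_filter.
apply: perm_big; apply: uniq_perm; first exact: filter_uniq.
  by [].
by move=> n; rewrite mem_filter; case: (boolP (n \in s)) => // /st ->.
Qed.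

Lemma dec_sum x : x = \sum_(n <- (dec x).1) comp n x.
Proof.
have [u [h e]] := proj2_sig (cid (gd_ex x)).
rewrite {1}e /comp; apply: eq_big_seq => n ->; by [].
Qed.

Lemma dec_uniq x : uniq (dec x).1.
Proof. by have [u _] := proj2_sig (cid (gd_ex x)). Qed.

Lemma comp_out n x : n \notin (dec x).1 -> comp n x = 0.
Proof. by rewrite /comp => /negPf ->. Qed.

Lemma indep (s : seq int) (c : int -> V) : uniq s -> (forall n, c n \in G n) ->
  \sum_(n <- s) c n = 0 -> forall n, n \in s -> c n = 0.
Proof. by case: hG => _ [_ [_ h]]; apply: h. Qed.

Lemma compE (s : seq int) (c : int -> V) x : uniq s -> (forall n, c n \in G n) ->
  x = \sum_(n <- s) c n -> forall n, comp n x = if n \in s then c n else 0.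
Proof.
move=> us hc ex n.
pose t := undup (s ++ (dec x).1).
have ut : uniq t by apply: undup_uniq.
pose d m := (if m \in s then c m else 0) - comp m x.
have hd m : d m \in G m.
  by apply: gdB; [case: ifP => _; [apply: hc | apply: gd0] | apply: comp_in].
have sd : \sum_(m <- t) d m = 0.
  rewrite big_split /= sumrN sum_mask //; last by move=> m hm; rewrite mem_undup mem_cat hm.
  have -> : \sum_(i <- t) comp i x = \sum_(i <- (dec x).1) comp i x.
    rewrite -(sum_mask (comp^~ x) (dec_uniq x) ut); last by move=> m hm; rewrite mem_undup mem_cat hm orbT.
    apply: eq_bigr => m _; case: ifP => // /negbT; exact: comp_out.
  by rewrite -dec_sum -ex subrr.
case: (boolP (n \in t)) => nt.
  by have := indep ut hd sd nt; move/eqP; rewrite subr_eq0 => /eqP ->.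
have ns : n \notin s by move: nt; rewrite mem_undup mem_cat negb_or => /andP[].
have nd : n \notin (dec x).1 by move: nt; rewrite mem_undup mem_cat negb_or => /andP[].
by rewrite (negPf ns) comp_out.
Qed.

Lemma compG m x : x \in G m -> forall n, comp n x = if n == m then x else 0.
Proof.
move=> hx n; pose c k := if k == m then x else 0.
have hc k : c k \in G k by rewrite /c; case: eqP => [->|_] //; apply: gd0.
rewrite (@compE [:: m] c x) //; first by rewrite inE /c; case: eqP.
by rewrite big_seq1 /c eqxx.
Qed.

Lemma compGG m x : x \in G m -> comp m x = x.
Proof. by move/compG => ->; rewrite eqxx. Qed.

Lemma comp0 n : comp n 0 = 0.
Proof. by rewrite (compG (gd0 0)); case: ifP. Qed.

Lemma dec_sum_sup x (t : seq int) : uniq t -> {subset (dec x).1 <= t} ->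
  x = \sum_(n <- t) comp n x.
Proof.
move=> ut st; rewrite {1}(dec_sum x) -(sum_mask (comp^~ x) (dec_uniq x) ut st).
apply: eq_bigr => m _; case: ifP => // /negbT; by move/comp_out ->.
Qed.

Lemma compD n x y : comp n (x + y) = comp n x + comp n y.
Proof.
pose t := undup ((dec x).1 ++ (dec y).1).
have ut : uniq t by apply: undup_uniq.
have e : x + y = \sum_(m <- t) (comp m x + comp m y).
  rewrite big_split /= -!dec_sum_sup //.
  - by move=> m hm; rewrite mem_undup mem_cat hm orbT.
  - by move=> m hm; rewrite mem_undup mem_cat hm.
rewrite (compE ut _ e); last by move=> m; apply: gdD; apply: comp_in.
case: ifP => // /negbT; rewrite mem_undup mem_cat negb_or => /andP[h1 h2].
by rewrite !comp_out // addr0.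
Qed.

Lemma compN n x : comp n (- x) = - comp n x.
Proof. by apply/eqP; rewrite -addr_eq0 -compD addNr comp0. Qed.

Lemma compB n x y : comp n (x - y) = comp n x - comp n y.
Proof. by rewrite compD compN. Qed.

Lemma comp_sum I (r : seq I) (F : I -> V) n :
  comp n (\sum_(i <- r) F i) = \sum_(i <- r) comp n (F i).
Proof.
elim: r => [|i r IH]; first by rewrite !big_nil comp0.
by rewrite !big_cons compD IH.
Qed.

Lemma comp_eq0 x : (forall n, comp n x = 0) -> x = 0.
Proof. move=> h; rewrite (dec_sum x); apply: big1 => n _; exact: h. Qed.

Lemma comp_neq0 x : x != 0 -> exists n, comp n x != 0.
Proof.
move=> hx; apply/not_existsP => h; move/eqP: hx; apply; apply: comp_eq0.
by move=> n; apply/eqP; apply/negPn/negP => hn; apply: (h n).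
Qed.

Lemma G_uniq m n x : x \in G m -> x \in G n -> x != 0 -> m = n.
Proof.
move=> hm hn nz; have := compG hm n; rewrite compGG //.
by case: eqP => // _ /eqP; rewrite (negPf nz).
Qed.

End Comp.

Section CompShift.
Variables (V : zmodType) (G : int -> pred V) (hG : graded_decomp G).

Lemma compE_shift (s : seq int) (c : int -> V) (j : int) x : uniq s ->
  (forall n, c n \in G (n + j)) -> x = \sum_(n <- s) c n ->
  forall m, comp hG m x = if (m - j) \in s then c (m - j) else 0.
Proof.
move=> us hc ex m.
have inj : injective (fun n : int => n + j) by move=> a b /addIr.
pose c' k := c (k - j).
have hc' k : c' k \in G k by rewrite /c'; have := hc (k - j); rewrite subrK.
have e : x = \sum_(n <- map (fun n => n + j) s) c' n.
  by rewrite big_map ex; apply: eq_bigr => n _; rewrite /c' addrK.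
rewrite (compE hG _ hc' e); last by rewrite (map_inj_uniq inj).
rewrite /c' -[m in m \in _](subrK j) (mem_map inj) //.
Qed.

End CompShift.

Section ModComp.
Variables (A : comNzRingType) (GA : int -> pred A) (hA : pos_graded_ring GA).
Variables (V : lmodType A) (GV : int -> pred V) (hV : graded_module GA GV).

Definition hAd : graded_decomp GA := hA.1.
Definition hVd : graded_decomp GV := hV.1.

Lemma gm_scale i n a x : a \in GA i -> x \in GV n -> a *: x \in GV (i + n).
Proof. by case: hV => _ h; apply: h. Qed.

Lemma ga_mul i j (a b : A) : a \in GA i -> b \in GA j -> a * b \in GA (i + j).
Proof. by case: hA => _ [_ [h _]]; apply: h. Qed.

Lemma ga1 : (1 : A) \in GA 0. Proof. by case: hA => _ [h _]. Qed.

Lemma compZl i a x n : a \in GA i ->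
  comp hVd n (a *: x) = a *: comp hVd (n - i) x.
Proof.
move=> ha.
have e : a *: x = \sum_(k <- (dec hVd x).1) a *: comp hVd k x.
  by rewrite -scaler_sumr -dec_sum.
rewrite (compE_shift hVd (j := i) (dec_uniq hVd x) _ e).
  by case: ifP => // /negbT /comp_out ->; rewrite scaler0.
by move=> k; rewrite addrC; apply: gm_scale => //; apply: comp_in.
Qed.

Lemma compZr j a x n : x \in GV j ->
  comp hVd n (a *: x) = comp hAd (n - j) a *: x.
Proof.
move=> hx.
have e : a *: x = \sum_(k <- (dec hAd a).1) comp hAd k a *: x.
  by rewrite -scaler_suml -dec_sum.
rewrite (compE_shift hVd (j := j) (dec_uniq hAd a) _ e).
  by case: ifP => // /negbT /comp_out ->; rewrite scale0r.
by move=> k; apply: gm_scale => //; apply: comp_in.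
Qed.

End ModComp.

Section MapComp.
Variables (A : comNzRingType) (M N : lmodType A) (GM : int -> pred M) (GN : int -> pred N).
Variables (hM : graded_decomp GM) (hN : graded_decomp GN).

Lemma comp_map d (f : {linear M -> N}) : graded_map_deg GM GN d f ->
  forall x n, comp hN n (f x) = f (comp hM (n - d) x).
Proof.
move=> hf x n.
have e : f x = \sum_(k <- (dec hM x).1) f (comp hM k x).
  by rewrite {1}(dec_sum hM x) linear_sum.
rewrite (compE_shift hN (j := d) (dec_uniq hM x) _ e).
  by case: ifP => // /negbT /comp_out ->; rewrite linear0.
by move=> k; rewrite addrC; apply: hf; apply: comp_in.
Qed.

End MapComp.

Section Sub.
Variables (A : comNzRingType) (V : lmodType A) (U : V -> Prop).
Hypotheses (U0 : U 0) (UB : forall x y, U x -> U y -> U (x - y))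
  (UZ : forall (a : A) x, U x -> U (a *: x)).

Definition subP : pred V := fun x => `[< U x >].
Definition subT := {x : V | subP x}.
HB.instance Definition _ := [isSub of subT for @sval _ _].
HB.instance Definition _ := [Choice of subT by <:].

Lemma subP_closed : subsemimod_closed subP.
Proof.
apply: GRing.submod_closed_semi; split; first by apply/asboolP.
move=> a u v /asboolP hu /asboolP hv; apply/asboolP.
have -> : a *: u + v = a *: u - (0 - v) by rewrite sub0r opprK.
by apply: UB; [apply: UZ | apply: UB].
Qed.

HB.instance Definition _ := GRing.SubChoice_isSubLmodule.Build A V subP subT subP_closed.

Definition subT_lmod : lmodType A := subT.
Definition sval_lin : {linear subT_lmod -> V} := val.
End Sub.
Check sval_lin.


Section SubLemmas.
Variables (A : comNzRingType) (V : lmodType A) (U : V -> Prop).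
Hypotheses (U0 : U 0) (UB : forall x y, U x -> U y -> U (x - y))
  (UZ : forall (a : A) x, U x -> U (a *: x)).
Lemma svalZ a (x : subT_lmod U0 UB UZ) : sval (a *: x) = a *: sval x.
Proof. exact: (linearZZ (sval_lin U0 UB UZ)). Qed.
Lemma svalB (x y : subT_lmod U0 UB UZ) : sval (x - y) = sval x - sval y.
Proof. exact: (raddfB (sval_lin U0 UB UZ)). Qed.
Lemma sval0 : sval (0 : subT_lmod U0 UB UZ) = 0.
Proof. exact: (raddf0 (sval_lin U0 UB UZ)). Qed.
Lemma sval_sum I (r : seq I) (F : I -> subT_lmod U0 UB UZ) :
  sval (\sum_(i <- r) F i) = \sum_(i <- r) sval (F i).
Proof. exact: (raddf_sum (sval_lin U0 UB UZ)). Qed.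
Lemma svalU (x : subT_lmod U0 UB UZ) : U (sval x).
Proof. by have := svalP x; rewrite /subP => /asboolP. Qed.
Definition mkS x (h : U x) : subT_lmod U0 UB UZ := exist _ x (asboolT h).
Lemma sval_inj : injective (fun x : subT_lmod U0 UB UZ => sval x).
Proof. exact: val_inj. Qed.
End SubLemmas.

Section SubGraded.
Variables (A : comNzRingType) (GA : int -> pred A).
Variables (V : lmodType A) (GV : int -> pred V) (hV : graded_module GA GV).
Variables (U : V -> Prop).
Hypotheses (U0 : U 0) (UB : forall x y, U x -> U y -> U (x - y))
  (UZ : forall (a : A) x, U x -> U (a *: x))
  (Ucomp : forall x n, U x -> U (comp hV.1 n x)).

Definition subG (n : int) : pred (subT_lmod U0 UB UZ) := fun x => sval x \in GV n.

Lemma subGE n x : (x \in subG n) = (sval x \in GV n). Proof. by []. Qed.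

Lemma subG_graded : graded_module GA subG.
Proof.
pose hd := hV.1.
split; last first.
  move=> i n a x ha hx; rewrite subGE svalZ; exact: (gm_scale hV ha hx).
split; first by move=> n; rewrite subGE sval0; exact: gd0 hd n.
split; first by move=> n x y hx hy; rewrite subGE svalB; exact: gdB.
split.
  move=> x; have Ux := svalU x.
  pose c n := mkS U0 UB UZ (Ucomp n Ux).
  exists (dec hd (sval x)).1, c; split; first exact: dec_uniq.
  split; first by move=> n; rewrite subGE /=; exact: comp_in.
  apply: val_inj; rewrite /= sval_sum; exact: (dec_sum hd (sval x)).
move=> s c us hc e n ns.
apply: val_inj; change (sval (c n) = sval (0 : subT_lmod U0 UB UZ)); rewrite sval0.
have hc' : forall k, sval (c k) \in GV k by move=> k; rewrite -subGE.
apply: (indep hd us hc') => //.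
by rewrite -sval_sum e sval0.
Qed.
End SubGraded.

Section Shift.
Variables (A : comNzRingType) (GA : int -> pred A).
Variables (V : lmodType A) (GV : int -> pred V) (hV : graded_module GA GV).

Lemma shift_graded (d : int) : graded_module GA (fun n => GV (n + d)).
Proof.
pose hd := hV.1.
have inj : injective (fun n : int => n - d) by move=> a b /addIr.
have inj' : injective (fun n : int => n + d) by move=> a b /addIr.
split; last first.
  by move=> i n a x ha hx; rewrite -addrA; apply: (gm_scale hV ha hx).
split; first by move=> n; exact: gd0 hd _.
split; first by move=> n x y; exact: gdB.
split.
  move=> x; exists (map (fun n => n - d) (dec hd x).1), (fun n => comp hd (n + d) x).
  split; first by rewrite map_inj_uniq // dec_uniq.
  split; first by move=> n; exact: comp_in.
  by rewrite big_map {1}(dec_sum hd x); apply: eq_bigr => n _; rewrite subrK.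
move=> s c us hc e n ns.
have := @indep _ _ hd (map (fun n => n + d) s) (fun k => c (k - d)).
rewrite map_inj_uniq // => /(_ us).
have h2 : forall k, c (k - d) \in GV k by move=> k; have := hc (k - d); rewrite subrK.
move=> /(_ h2); rewrite big_map.
have -> : \sum_(i <- s) c (i + d - d) = 0.
  by rewrite -[RHS]e; apply: eq_bigr => i _; rewrite addrK.
move=> /(_ erefl (n + d)); rewrite addrK; apply; by rewrite (mem_map inj').
Qed.
End Shift.

Section CML.
Variables (A : comNzRingType) (GA : int -> pred A) (hA : pos_graded_ring GA).
Variables (M : lmodType A) (GM : int -> pred M) (hM : graded_module GA GM).
Variables (N : lmodType A) (GN : int -> pred N) (hN : graded_module GA GN).
Variables (m : M) (y : N) (hann : forall r : A, r *: m = 0 -> r *: y = 0).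

Definition Ucyc (x : M) := exists r : A, x = r *: m.
Lemma Ucyc0 : Ucyc 0. Proof. by exists 0; rewrite scale0r. Qed.
Lemma UcycB x1 x2 : Ucyc x1 -> Ucyc x2 -> Ucyc (x1 - x2).
Proof. by move=> [r1 ->] [r2 ->]; exists (r1 - r2); rewrite scalerBl. Qed.
Lemma UcycZ (a : A) x : Ucyc x -> Ucyc (a *: x).
Proof. by move=> [r ->]; exists (a * r); rewrite scalerA. Qed.

Definition Xc := subT_lmod Ucyc0 UcycB UcycZ.

Definition f0 (x : Xc) : N := (proj1_sig (cid (svalU x))) *: y.

Lemma f0E (x : Xc) r : sval x = r *: m -> f0 x = r *: y.
Proof.
rewrite /f0; case: (cid (svalU x)) => r' /= e1 e2.
apply/eqP; rewrite -subr_eq0 -scalerBl; apply/eqP; apply: hann.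
by rewrite scalerBl -e1 -e2 subrr.
Qed.

Lemma f0_lin : linear f0.
Proof.
move=> a x1 x2.
have [r1 e1] := svalU x1; have [r2 e2] := svalU x2.
rewrite (f0E e1) (f0E e2) (@f0E _ (a * r1 + r2)).
  by rewrite scalerDl scalerA.
change (sval (a *: x1 + x2) = (a * r1 + r2) *: m).
have -> : a *: x1 + x2 = a *: x1 - (0 - x2) by rewrite sub0r opprK.
by rewrite !svalB sval0 svalZ e1 e2 sub0r opprK scalerDl scalerA.
Qed.

HB.instance Definition _ := GRing.isLinear.Build A Xc N *:%R f0 f0_lin.

Definition f0L : {linear Xc -> N} := f0.
End CML.

Lemma CML (A : comNzRingType) (GA : int -> pred A) (hA : pos_graded_ring GA)
  (M : lmodType A) (GM : int -> pred M) (hM : graded_module GA GM)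
  (N : lmodType A) (GN : int -> pred N) (hN : graded_module GA GN)
  (hinj : gr_injective GA GN) (j k : int) (m : M) (y : N)
  (hm : m \in GM j) (hy : y \in GN k)
  (hann : forall r : A, r *: m = 0 -> r *: y = 0) :
  exists d (f : {linear M -> N}), graded_map_deg GM GN d f /\ f m = y.
Proof.
have Ucomp : forall x n, Ucyc m x -> Ucyc m (comp hM.1 n x).
  move=> x n [r ->]; exists (comp (hAd hA) (n - j) r).
  exact: (compZr hA hM).
pose GX := @subG _ _ GM _ (Ucyc0 m) (@UcycB _ _ m) (@UcycZ _ _ m).
have hX : graded_module GA GX := subG_graded (Ucyc0 m) (@UcycB _ _ m) (@UcycZ _ _ m) Ucomp.
pose e := j - k.
pose GX' := fun n => GX (n + e).
pose GM' := fun n => GM (n + e).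
have hX' : graded_module GA GX' := shift_graded hX e.
have hM' : graded_module GA GM' := shift_graded hM e.
have hi : graded_map_deg GX' GM' 0 (sval_lin (Ucyc0 m) (@UcycB _ _ m) (@UcycZ _ _ m)).
  by move=> n x hx; rewrite add0r.
have hinji : injective (sval_lin (Ucyc0 m) (@UcycB _ _ m) (@UcycZ _ _ m)) by apply: val_inj.
have hf : graded_map_deg GX' GN 0 (f0L hann).
  move=> n x; rewrite add0r /GX' /GX subGE => hx.
  have [r er] := svalU x.
  rewrite /= (f0E hann er).
  have h1 : sval x = comp (hAd hA) (n - k) r *: m.
    rewrite -(compGG (hVd hM) hx) er (compZr hA hM _ _ hm).
    by congr (comp _ _ r *: m); rewrite /e; lia.
  have -> : r *: y = comp (hAd hA) (n - k) r *: y.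
    apply/eqP; rewrite -subr_eq0 -scalerBl; apply/eqP; apply: hann.
    by rewrite scalerBl -er -h1 subrr.
  have := gm_scale hN (comp_in (hAd hA) (n - k) r) hy; by rewrite subrK.
have [g [hg gE]] := hinj _ _ _ _ hX' hM' _ _ hi hinji hf.
exists (k - j), g; split.
  move=> t x hx.
  have hx' : x \in GM' (t + (k - j)).
    by rewrite /GM' /e; have -> : t + (k - j) + (j - k) = t by lia.
  by have := hg _ _ hx'; rewrite add0r addrC.
have mU : Ucyc m m by exists 1; rewrite scale1r.
have := gE (mkS (Ucyc0 m) (@UcycB _ _ m) (@UcycZ _ _ m) mU); rewrite /= => ->.
by rewrite (@f0E _ _ _ _ _ hann _ 1) ?scale1r.
Qed.

Section GSub.
Variables (A : comNzRingType) (V : lmodType A) (GV : int -> pred V) (hd : graded_decomp GV).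

Definition gsub (U : V -> Prop) :=
  [/\ U 0, (forall x y, U x -> U y -> U (x - y)),
      (forall (a : A) x, U x -> U (a *: x)) & (forall x n, U x -> U (comp hd n x))].

Lemma gsub_graded U : gsub U -> graded_submodule GV U.
Proof.
case=> h0 hB hZ hC; split=> //; split=> //; split=> // s c us hc hU n ns.
by have := hC _ n hU; rewrite (compE hd us hc erefl) ns.
Qed.

Lemma graded_gsub U : graded_submodule GV U -> gsub U.
Proof.
case=> h0 [hB [hZ hC]]; split=> // x n hx.
case: (boolP (n \in (dec hd x).1)) => ns; last by rewrite comp_out.
apply: (hC _ (comp hd ^~ x) (dec_uniq hd x)) => //; first by move=> k; apply: comp_in.
by rewrite -dec_sum.
Qed.

Lemma gsubD U x y : gsub U -> U x -> U y -> U (x + y).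
Proof.
move=> [h0 hB _ _] hx hy; rewrite -[y]opprK -[- y]sub0r; apply: (hB) => //; exact: hB.
Qed.

Lemma gsub_sum U I (r : seq I) (F : I -> V) : gsub U -> (forall i, U (F i)) ->
  U (\sum_(i <- r) F i).
Proof.
move=> hU hF; elim: r => [|i r IH]; first by rewrite big_nil; case: hU.
by rewrite big_cons; apply: gsubD.
Qed.
End GSub.

Section ZornGsub.
Variables (A : comNzRingType) (V : lmodType A) (GV : int -> pred V) (hd : graded_decomp GV).
Variables (Q : (V -> Prop) -> Prop) (B0 : V -> Prop).
Hypotheses (hB0 : gsub hd B0) (QB0 : Q B0)
  (Qchain : forall F : (V -> Prop) -> Prop, (forall W, F W -> gsub hd W /\ Q W) ->
     total_on F subset -> (exists W, F W) -> Q (bigcup F id)).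

Lemma zorn_gsub : exists W, [/\ gsub hd W, Q W &
  forall W', gsub hd W' -> Q W' -> (forall v, W v -> W' v) -> forall v, W' v -> W v].
Proof.
pose P (W : V -> Prop) := (forall v, ~ W v) \/ (gsub hd W /\ Q W).
have hP : forall F : set (set V), subset F P -> total_on F subset -> P (bigcup F id).
  move=> F FP tot.
  case: (pselect (exists W, F W /\ exists v, W v)) => [[W0 [FW0 [v0 W0v0]]]|nF]; last first.
    left=> v [W FW Wv]; apply: nF; by exists W; split => //; exists v.
  have FQ : forall W, F W -> (exists v, W v) -> gsub hd W /\ Q W.
    by move=> W FW [v Wv]; case: (FP W FW) => // /(_ v).
  pose F' W := F W /\ exists v, W v.
  have eqU : bigcup F id = bigcup F' id.
    apply: funext => v; apply: propext; split.
      by move=> [W FW Wv]; exists W => //; split => //; exists v.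
    by move=> [W [FW _] Wv]; exists W.
  right; rewrite eqU; split.
  - have [h0 hBB hZ hC] := (FQ _ FW0 (ex_intro _ v0 W0v0)).1.
    split.
    + by exists W0 => //; split => //; exists v0.
    + move=> x y [W1 [FW1 n1] W1x] [W2 [FW2 n2] W2y].
      case: (tot _ _ FW1 FW2) => s12.
      * exists W2; first by split.
        by case: (FQ _ FW2 n2) => -[_ hB2 _ _] _; apply: hB2 => //; apply: s12.
      * exists W1; first by split.
        by case: (FQ _ FW1 n1) => -[_ hB1 _ _] _; apply: hB1 => //; apply: s12.
    + move=> a x [W1 [FW1 n1] W1x]; exists W1; first by split.
      by case: (FQ _ FW1 n1) => -[_ _ hZ1 _] _; apply: hZ1.
    + move=> x n [W1 [FW1 n1] W1x]; exists W1; first by split.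
      by case: (FQ _ FW1 n1) => -[_ _ _ hC1] _; apply: hC1.
  - apply: Qchain.
    + by move=> W [FW nW]; apply: FQ.
    + by move=> W1 W2 [F1 _] [F2 _]; apply: tot.
    + by exists W0; split => //; exists v0.
have [W [PW maxW]] := Zorn_bigcup hP.
case: PW => [W0 | [gW QW]].
  exfalso; apply: (maxW B0); last by right.
  split; first by move=> v /W0.
  by move=> h; case: hB0 => h0 _ _ _; apply: (W0 0); apply: h.
exists W; split => // W' gW' QW' sW v W'v.
case: (pselect (W v)) => // nWv; exfalso; apply: (maxW W'); last by right.
by split => // h; apply: nWv; apply: h.
Qed.
End ZornGsub.

Section Proj.
Variables (A : comNzRingType) (E : lmodType A) (GE : int -> pred E) (hd : graded_decomp GE).
Variables (V C : E -> Prop) (gV : gsub hd V) (gC : gsub hd C)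
  (VC0 : forall w, V w -> C w -> w = 0).

Definition UVC w := exists v c, [/\ V v, C c & w = v + c].
Lemma UVC0 : UVC 0.
Proof. exists 0, 0; case: gV => ? _ _ _; case: gC => ? _ _ _; by rewrite addr0. Qed.
Lemma UVCB x y : UVC x -> UVC y -> UVC (x - y).
Proof.
move=> [v1 [c1 [h1 h2 ->]]] [v2 [c2 [h3 h4 ->]]]; exists (v1 - v2), (c1 - c2).
case: gV => _ hV _ _; case: gC => _ hC _ _; split; [exact: hV | exact: hC|].
by rewrite opprD addrACA.
Qed.
Lemma UVCZ (a : A) x : UVC x -> UVC (a *: x).
Proof.
move=> [v [c [h1 h2 ->]]]; exists (a *: v), (a *: c).
case: gV => _ _ hV _; case: gC => _ _ hC _; split; [exact: hV | exact: hC|].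
by rewrite scalerDr.
Qed.
Lemma UVCcomp x n : UVC x -> UVC (comp hd n x).
Proof.
move=> [v [c [h1 h2 ->]]]; exists (comp hd n v), (comp hd n c).
case: gV => _ _ _ hV; case: gC => _ _ _ hC; split; [exact: hV | exact: hC|].
by rewrite compD.
Qed.

Definition XVC := subT_lmod UVC0 UVCB UVCZ.

Lemma VCuniq v c v' c' : V v -> C c -> V v' -> C c' -> v + c = v' + c' -> v = v'.
Proof.
move=> hv hc hv' hc' e.
have h : v - v' = c' - c.
  have : (v + c) - (v' + c') = 0 by rewrite e subrr.
  by rewrite opprD addrACA => /eqP; rewrite addr_eq0 => /eqP ->; rewrite opprB.
apply/eqP; rewrite -subr_eq0; apply/eqP; apply: VC0.
  by case: gV => _ hB _ _; apply: hB.
by rewrite h; case: gC => _ hB _ _; apply: hB.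
Qed.

Definition pr (w : XVC) : E := proj1_sig (cid (svalU w)).

Lemma prE (w : XVC) v c : V v -> C c -> sval w = v + c -> pr w = v.
Proof.
rewrite /pr; case: (cid (svalU w)) => v' [c' [h1 h2 e1]] /= hv hc e2.
by apply: (VCuniq h1 h2 hv hc); rewrite -e1 -e2.
Qed.

Lemma pr_lin : linear pr.
Proof.
move=> a x1 x2.
have [v1 [c1 [h1 h2 e1]]] := svalU x1; have [v2 [c2 [h3 h4 e2]]] := svalU x2.
rewrite (prE h1 h2 e1) (prE h3 h4 e2) (@prE _ (a *: v1 + v2) (a *: c1 + c2)) //.
- by apply: (gsubD gV) => //; case: gV => _ _ hZ _; apply: hZ.
- by apply: (gsubD gC) => //; case: gC => _ _ hZ _; apply: hZ.
change (sval (a *: x1 + x2) = (a *: v1 + v2) + (a *: c1 + c2)).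
have -> : a *: x1 + x2 = a *: x1 - (0 - x2) by rewrite sub0r opprK.
rewrite !svalB sval0 svalZ e1 e2 sub0r opprK scalerDr.
by rewrite addrACA.
Qed.

HB.instance Definition _ := GRing.isLinear.Build A XVC E *:%R pr pr_lin.
Definition prL : {linear XVC -> E} := pr.
End Proj.

Lemma gsub_cyc (A : comNzRingType) (GA : int -> pred A) (hA : pos_graded_ring GA)
  (E : lmodType A) (GE : int -> pred E) (hE : graded_module GA GE) i (x : E) :
  x \in GE i -> gsub (hVd hE) (Ucyc x).
Proof.
move=> hx; split.
- exact: Ucyc0.
- exact: UcycB.
- exact: UcycZ.
- move=> w n [r ->]; exists (comp (hAd hA) (n - i) r); exact: (compZr hA hE).
Qed.

Lemma uniform_core (A : comNzRingType) (GA : int -> pred A) (hA : pos_graded_ring GA)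
  (E : lmodType A) (GE : int -> pred E) (hE : graded_module GA GE)
  (hinj : gr_injective GA GE) (hind : gr_indecomposable GE)
  i j (x y : E) (hx : x \in GE i) (hy : y \in GE j) (nx : x != 0) (ny : y != 0)
  (nsep : forall r s : A, r *: y = s *: x -> r *: y = 0) : False.
Proof.
pose hd := hVd hE.
pose ess (W : E -> Prop) := forall w n, W w -> w \in GE n -> w != 0 ->
  exists r s : A, r *: w = s *: x /\ r *: w != 0.
have [V [gV [Vx essV] maxV]] : exists V, [/\ gsub hd V, V x /\ ess V &
   forall W', gsub hd W' -> W' x /\ ess W' -> (forall v, V v -> W' v) -> forall v, W' v -> V v].
  apply: (zorn_gsub (B0 := Ucyc x)).
  - exact: (gsub_cyc hA hE hx).
  - split; first by exists 1; rewrite scale1r.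
    move=> w n [r ->] _ nz; exists 1, r; by rewrite scale1r.
  - move=> F hF tot [W0 FW0]; split.
      by exists W0 => //; have [_ [h _]] := hF _ FW0.
    move=> w n [W FW Ww]; have [_ [_ h]] := hF _ FW; exact: h.
have [C [gC QC maxC]] : exists C, [/\ gsub hd C, (forall w, C w -> V w -> w = 0) &
   forall W', gsub hd W' -> (forall w, W' w -> V w -> w = 0) ->
     (forall v, C v -> W' v) -> forall v, W' v -> C v].
  apply: (zorn_gsub (B0 := fun w => w = 0)).
  - split => //.
    + by move=> a b -> ->; rewrite subrr.
    + by move=> a w ->; rewrite scaler0.
    + by move=> w n ->; rewrite comp0.
  - by [].
  - move=> F hF tot _ w [W FW Ww]; have [_ h] := hF _ FW; exact: h.
have VC0 : forall w, V w -> C w -> w = 0 by move=> w hv hc; apply: QC.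
pose X := XVC gV gC.
pose GX := @subG _ _ GE _ (UVC0 gV gC) (UVCB gV gC) (UVCZ gV gC).
have hX : graded_module GA GX := subG_graded (UVC0 gV gC) (UVCB gV gC) (UVCZ gV gC) (UVCcomp gV gC).
have hi : graded_map_deg GX GE 0 (sval_lin (UVC0 gV gC) (UVCB gV gC) (UVCZ gV gC)).
  by move=> n w hw; rewrite add0r.
have hinji : injective (sval_lin (UVC0 gV gC) (UVCB gV gC) (UVCZ gV gC)) by apply: val_inj.
have hf : graded_map_deg GX GE 0 (prL gV gC VC0).
  move=> n w; rewrite add0r subGE => hw.
  have [v [c [hv hc e]]] := svalU w.
  rewrite /= (prE VC0 hv hc e).
  have e2 : comp hd n v + comp hd n c = v + c by rewrite -compD -e (compGG hd hw).
  have : v - comp hd n v = 0.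
    apply: (VC0); first by case: (gV) => _ hB _ hCp; apply: hB => //; apply: hCp.
    have -> : v - comp hd n v = comp hd n c - c.
      by apply/eqP; rewrite subr_eq addrAC [comp hd n c + _]addrC e2 addrK.
    by case: (gC) => _ hB _ hCp; apply: hB => //; apply: hCp.
  by move/eqP; rewrite subr_eq0 => /eqP ->; apply: comp_in.
have [phi [hphi phiE]] := hinj _ _ _ _ hX hE _ _ hi hinji hf.
have phiV : forall v, V v -> phi v = v.
  move=> v hv; have hU : UVC V C v.
    by exists v, 0; split => //; [case: (gC) | rewrite addr0].
  have := phiE (mkS (UVC0 gV gC) (UVCB gV gC) (UVCZ gV gC) hU); rewrite /= => ->.
  apply: (@prE _ _ _ _ _ _ gV gC VC0 _ v 0 hv); [by case: (gC) | by rewrite /= addr0].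
have phiC : forall c, C c -> phi c = 0.
  move=> c hc; have hU : UVC V C c.
    by exists 0, c; split => //; [case: (gV) | rewrite add0r].
  have := phiE (mkS (UVC0 gV gC) (UVCB gV gC) (UVCZ gV gC) hU); rewrite /= => ->.
  apply: (@prE _ _ _ _ _ _ gV gC VC0 _ 0 c _ hc); [by case: (gV) | by rewrite /= add0r].
have phicomp : forall w n, comp hd n (phi w) = phi (comp hd n w).
  by move=> w n; rewrite (comp_map hd hd hphi) subr0.
have kerC : forall w, phi w = 0 -> C w.
  apply: (maxC (fun w => phi w = 0)).
  - split.
    + exact: linear0.
    + by move=> a b ha hb; rewrite linearB /= ha hb subrr.
    + by move=> a w hw; rewrite linearZ /= hw scaler0.
    + by move=> w n hw; rewrite -phicomp hw comp0.
  - by move=> w hw hv; rewrite -(phiV _ hv).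
  - exact: phiC.
have imV : forall u, V (phi u).
  move=> u; apply: (maxV (fun w => exists u, w = phi u)); last by exists u.
  - split.
    + by exists 0; rewrite linear0.
    + by move=> a b [u1 ->] [u2 ->]; exists (u1 - u2); rewrite linearB.
    + by move=> a w [u1 ->]; exists (a *: u1); rewrite linearZ.
    + by move=> w n [u1 ->]; exists (comp hd n u1); rewrite phicomp.
  - split; first by exists x; rewrite phiV.
    move=> z n [u1 ->] hz nz.
    pose u' := comp hd n u1.
    have phiu' : phi u' = phi u1 by rewrite /u' -phicomp (compGG hd hz).
    have hu' : u' \in GE n by apply: comp_in.
    pose B w := exists c r, C c /\ w = c + r *: u'.
    have gB : gsub hd B.
      split.
      + by exists 0, 0; split; [case: (gC) | rewrite scale0r addr0].
      + move=> a b [c1 [r1 [h1 ->]]] [c2 [r2 [h2 ->]]]; exists (c1 - c2), (r1 - r2).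
        split; first by case: (gC) => _ hB _ _; apply: hB.
        by rewrite scalerBl opprD addrACA.
      + move=> a w [c1 [r1 [h1 ->]]]; exists (a *: c1), (a * r1).
        split; first by case: (gC) => _ _ hZ _; apply: hZ.
        by rewrite scalerDr scalerA.
      + move=> w k [c1 [r1 [h1 ->]]]; exists (comp hd k c1), (comp (hAd hA) (k - n) r1).
        split; first by case: (gC) => _ _ _ hCp; apply: hCp.
        by rewrite compD (compZr hA hE _ _ hu').
    have nBV : ~ (forall w, B w -> V w -> w = 0).
      move=> hBV.
      have Cu' : C u'.
        apply: (maxC B gB hBV); last by exists 0, 1; split; [case: (gC) | rewrite scale1r add0r].
        by move=> c hc; exists c, 0; split => //; rewrite scale0r addr0.
      by move: nz; rewrite -phiu' (phiC _ Cu') eqxx.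
    have [w [Bw [Vw nw]]] : exists w, B w /\ V w /\ w != 0.
      case: (pselect (exists w, B w /\ V w /\ w != 0)) => [//|hn].
      exfalso; apply: nBV => w0 Bw0 Vw0.
      case: (eqVneq w0 0) => // nw0; exfalso; apply: hn; by exists w0.
    have [c [r [Cc ew]]] := Bw.
    have [k nk] := comp_neq0 hd nw.
    pose w' := comp hd k w.
    have Vw' : V w' by case: (gV) => _ _ _ hCp; apply: hCp.
    have Cck : C (comp hd k c) by case: (gC) => _ _ _ hCp; apply: hCp.
    have ew' : w' = comp hd k c + comp (hAd hA) (k - n) r *: u'.
      by rewrite /w' ew compD (compZr hA hE _ _ hu').
    have hw' : w' = comp (hAd hA) (k - n) r *: phi u1.
      rewrite -phiu' -{1}(phiV _ Vw') ew' linearD linearZ /= (phiC _ Cck) add0r.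
      by [].
    have [r2 [s2 [e2 n2]]] := essV w' k Vw' (comp_in hd k w) nk.
    exists (r2 * comp (hAd hA) (k - n) r), s2; rewrite -scalerA -hw'; split => //.
  - by move=> v hv; exists v; rewrite phiV.
have decE : forall w, exists u w', [/\ V u, C w' & w = u + w'] .
  move=> w; exists (phi w), (w - phi w); split => //.
    by apply: kerC; rewrite linearB /= (phiV _ (imV w)) subrr.
  by rewrite addrC subrK.
have decE' : forall w, exists u w', V u /\ C w' /\ w = u + w'.
  by move=> w; have [u [w' [h1 h2 h3]]] := decE w; exists u, w'.
case: hind => _ /(_ V C (gsub_graded gV) (gsub_graded gC) VC0 decE') [hV0 | hC0].
  by move: nx; rewrite (hV0 x Vx) eqxx.
have Vy : V y.
  have := hC0 _ (kerC (y - phi y) _).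
  rewrite linearB /= (phiV _ (imV y)) subrr => /(_ erefl) /eqP; rewrite subr_eq0 => /eqP ->.
  exact: imV.
have [r [s [e ne]]] := essV y j Vy hy ny.
by move: ne; rewrite (nsep r s e) eqxx.
Qed.

Section Unif2.
Variables (A : comNzRingType) (GA : int -> pred A) (hA : pos_graded_ring GA).
Variables (E : lmodType A) (GE : int -> pred E) (hE : graded_module GA GE)
  (hinj : gr_injective GA GE) (hind : gr_indecomposable GE).

Lemma uniform i j (x y : E) : x \in GE i -> y \in GE j -> x != 0 -> y != 0 ->
  exists k (z : E), [/\ z \in GE k, z != 0,
    (forall r : A, r *: x = 0 -> r *: z = 0) & (forall r : A, r *: y = 0 -> r *: z = 0)].
Proof.
move=> hx hy nx ny.
have [[r s] [e ne]] : exists rs : A * A, rs.1 *: y = rs.2 *: x /\ rs.1 *: y != 0.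
  case: (pselect (exists rs : A * A, rs.1 *: y = rs.2 *: x /\ rs.1 *: y != 0)) => [//|h].
  exfalso; apply: (uniform_core hA hE hinj hind hx hy nx ny) => r s e.
  case: (eqVneq (r *: y) 0) => // nz; exfalso; apply: h; by exists (r, s).
simpl in e, ne.
have [k nk] := comp_neq0 (hVd hE) ne.
exists k, (comp (hVd hE) k (r *: y)); split.
- exact: comp_in.
- exact: nk.
- move=> t tx; rewrite e (compZr hA hE _ _ hx) scalerA mulrC -scalerA tx scaler0.
  by [].
- move=> t ty; rewrite (compZr hA hE _ _ hy) scalerA mulrC -scalerA ty scaler0.
  by [].
Qed.

Lemma common (s : seq (A * E)) k0 z0 : z0 \in GE k0 -> z0 != 0 ->
  (forall p, p \in s -> p.2 != 0 /\ homogeneous GE p.2) ->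
  exists k (z : E), [/\ z \in GE k, z != 0,
    (forall r : A, r *: z0 = 0 -> r *: z = 0) &
    (forall p r, p \in s -> r *: p.2 = 0 -> r *: z = 0)].
Proof.
move=> hz0 nz0; elim: s => [|p s IH] hs.
  by exists k0, z0; split.
have [k [z [hz nz h1 h2]]] := IH (fun q hq => hs q (@mem_behead _ (p :: s) q hq)).
have [np [kp hp]] := hs p (mem_head _ _).
have [k' [z' [hz' nz' h1' h2']]] := uniform hz hp nz np.
exists k', z'; split => //.
- by move=> r /h1 /h1'.
move=> q r; rewrite inE => /orP[/eqP -> |hq].
  by move/h2'.
by move=> /(h2 _ _ hq) /h1'.
Qed.

Lemma E_nonzero_hom : exists k (z : E), z \in GE k /\ z != 0.
Proof.
have [x nx] := hind.1.
have [k nk] := comp_neq0 (hVd hE) nx.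
by exists k, (comp (hVd hE) k x); split => //; apply: comp_in.
Qed.

Lemma P_common (cs : seq A) : (forall c, c \in cs -> P_of GE c) ->
  exists k (z : E), [/\ z \in GE k, z != 0 & forall c, c \in cs -> c *: z = 0].
Proof.
elim: cs => [|c cs IH] hcs.
  by have [k [z [hz nz]]] := E_nonzero_hom; exists k, z; split.
have [k [z [hz nz hc]]] := IH (fun c0 hc0 => hcs c0 (@mem_behead _ (c :: cs) c0 hc0)).
have [s [hs ->]] := hcs c (mem_head _ _).
have hs' : forall p, p \in s -> p.2 != 0 /\ homogeneous GE p.2.
  by move=> p /hs [? [? _]].
have [k' [z' [hz' nz' h1 h2]]] := common hz nz hs'.
exists k', z'; split => //.
move=> c'; rewrite inE => /orP[/eqP -> |hc'].
  by rewrite scaler_suml; apply: big1_seq => p ps; apply: (h2 p) => //; have [_ [_ h]] := hs p ps.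
by move: hc' => /hc /h1.
Qed.

Lemma P_proper : ~ P_of GE 1.
Proof.
move=> h1.
have hc1 : forall c, c \in [:: 1] -> P_of GE c by move=> c; rewrite inE => /eqP ->.
have [k [z [hz nz hc]]] := P_common hc1.
by move: nz; rewrite -(scale1r z) hc ?inE ?eqxx.
Qed.

Lemma P_single r (x : E) : x != 0 -> homogeneous GE x -> r *: x = 0 -> P_of GE r.
Proof.
move=> nx hx rx; exists [:: (r, x)]; split; last by rewrite big_seq1.
by move=> p; rewrite inE => /eqP ->.
Qed.
End Unif2.

Definition ann_fg_prop (A : comNzRingType) (M : lmodType A) (GM : int -> pred M) :=
  forall (m : M) j, m \in GM j -> exists (J : finType) (b : J -> A), (forall l, b l *: m = 0) /\
    (forall r, r *: m = 0 -> exists t : J -> A, r = \sum_l t l * b l).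

Lemma main_given (A : comNzRingType) (GA : int -> pred A)
  (hA : pos_graded_ring GA)
  (E : lmodType A) (GE : int -> pred E) (hE : graded_module GA GE)
  (hinj : gr_injective GA GE) (hind : gr_indecomposable GE)
  (EP : lmodType A) (GEP : int -> pred EP)
  (hEP : gr_injective_hull_of_quotient GA (P_of GE) GEP)
  (M : lmodType A) (GM : int -> pred M) (hM : graded_module GA GM)
  (hfg : ann_fg_prop GM) :
    (gHom_nonzero GM GE <-> gHom_nonzero GM GEP).
Proof.
have [hEPg [hEPinj [e [he0 [heann hess]]]]] := hEP.
have Pp := P_proper hA hE hinj hind.
have ne : e != 0.
  apply/eqP => e0; apply: Pp; apply/heann; by rewrite e0 scaler0.
split.
- move=> [d [f [hf [x nx]]]].
  have [n nn] := comp_neq0 (hVd hE) nx.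
  rewrite (comp_map (hVd hM) (hVd hE) hf) in nn.
  set m := comp _ _ x in nn.
  have hm : m \in GM (n - d) by apply: comp_in.
  have hann : forall r, r *: m = 0 -> r *: e = 0.
    move=> r rm; apply/heann; apply: (P_single (x := f m)) => //.
      by exists (d + (n - d)); apply: hf; exact: hm.
    by rewrite -linearZ /= rm linear0.
  have [d' [g [hg gm]]] := CML hA hM hEPg hEPinj hm he0 hann.
  by exists d', g; split => //; exists m; rewrite gm.
- move=> [d [f [hf [x nx]]]].
  pose U w := exists u, w = f u.
  have gU : gsub (hVd hEPg) U.
    split.
    + by exists 0; rewrite linear0.
    + by move=> a b [u1 ->] [u2 ->]; exists (u1 - u2); rewrite linearB.
    + by move=> a w [u1 ->]; exists (a *: u1); rewrite linearZ.
    + move=> w n [u1 ->]; exists (comp (hVd hM) (n - d) u1).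
      by rewrite (comp_map (hVd hM) (hVd hEPg) hf).
  have [a [nae Uae]] := hess U (gsub_graded gU) (ex_intro _ (f x) (conj (ex_intro _ x erefl) nx)).
  have [n nn] := comp_neq0 (hVd hEPg) nae.
  have ea : comp (hVd hEPg) n (a *: e) = comp (hAd hA) n a *: e.
    by rewrite (compZr hA hEPg _ _ he0) subr0.
  set a' := comp (hAd hA) n a in ea.
  have ha' : a' \in GA n by apply: comp_in.
  have [w ew] : U (a' *: e) by rewrite -ea; case: gU => _ _ _ hC; apply: hC.
  pose m := comp (hVd hM) (n - d) w.
  have hm : m \in GM (n - d) by apply: comp_in.
  have fm : f m = a' *: e.
    have hae : a' *: e \in GEP n by rewrite -[n]addr0; apply: (gm_scale hEPg).
    by rewrite -(comp_map (hVd hM) (hVd hEPg) hf) -ew (compGG _ hae).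
  have [J [b [hb1 hb2]]] := hfg m _ hm.
  have Pba : forall c, c \in [seq b l * a' | l <- enum J] -> P_of GE c.
    move=> c /mapP [l _ ->]; apply/heann.
    by rewrite -scalerA -fm -linearZ /= hb1 linear0.
  have [k [z [hz nz hcz]]] := P_common hA hE hinj hind Pba.
  have naz : a' *: z != 0.
    apply/eqP => az0; move: nn; rewrite ea => /eqP; apply.
    by apply/heann; apply: (P_single (x := z)) => //; exists k.
  have haz : a' *: z \in GE (n + k) by apply: (gm_scale hE).
  have hann : forall r, r *: m = 0 -> r *: (a' *: z) = 0.
    move=> r rm; have [t ->] := hb2 r rm.
    rewrite scaler_suml; apply: big1 => l _.
    rewrite scalerA -mulrA -scalerA hcz ?scaler0 //.
    by apply/mapP; exists l => //; rewrite mem_enum.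
  have [d' [g [hg gm]]] := CML hA hM hE hinj hm haz hann.
  by exists d', g; split => //; exists m; rewrite gm.
Qed.

Section Coh.
Variables (A : comNzRingType) (GA : int -> pred A) (hA : pos_graded_ring GA).
Let hd := hAd hA.

Lemma compMr x y d n : y \in GA d -> comp hd n (x * y) = comp hd (n - d) x * y.
Proof.
move=> hy.
have e : x * y = \sum_(k <- (dec hd x).1) comp hd k x * y.
  by rewrite -mulr_suml -dec_sum.
rewrite (compE_shift hd (j := d) (dec_uniq hd x) _ e).
  by case: ifP => // /negbT /comp_out ->; rewrite mul0r.
by move=> k; apply: ga_mul => //; apply: comp_in.
Qed.

Definition syz (K : finType) n (w : K -> 'I_n -> A) (t : K -> A) :=
  forall j, \sum_i t i * w i j = 0.
Definition inspan (K : finType) n (w : K -> 'I_n -> A) (v : 'I_n -> A) :=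
  exists t : K -> A, forall j, v j = \sum_i t i * w i j.
Definition gspan (K : finType) n (w : K -> 'I_n -> A) (c : 'I_n -> int) :=
  forall v, inspan w v -> forall dl, inspan w (fun j => comp hd (dl - c j) (v j)).
Definition syz_fg (K : finType) n (w : K -> 'I_n -> A) :=
  exists (J : finType) (z : J -> K -> A), (forall l, syz w (z l)) /\
    (forall t, syz w t -> exists s : J -> A, forall i, t i = \sum_l s l * z l i).

Lemma sum_mulA (I J : finType) (f : I -> J -> A) (x : J -> A) :
  \sum_j (\sum_i f i j) * x j = \sum_i \sum_j f i j * x j.
Proof.
rewrite exchange_big /=; apply: eq_bigr => j _; by rewrite mulr_suml.
Qed.

Lemma sum_delta (K : finType) (t : K -> A) i : \sum_i0 t i0 * (i0 == i)%:R = t i.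
Proof.
rewrite (bigD1 i) //= eqxx mulr1 big1 ?addr0 // => i0 /negPf ->; by rewrite mulr0.
Qed.

Lemma ideal_syz (hcoh : gr_coherent GA) (K : finType) (p : K -> A)
  (hI : forall a dl, (exists t : K -> A, a = \sum_i t i * p i) ->
        exists t' : K -> A, comp hd dl a = \sum_i t' i * p i) :
  exists (J : finType) (z : J -> K -> A), (forall l, \sum_i z l i * p i = 0) /\
    (forall t, \sum_i t i * p i = 0 -> exists s : J -> A, forall i, t i = \sum_l s l * z l i).
Proof.
pose I (a : A^o) := exists t : K -> A, a = \sum_i t i * p i.
have gI : gsub (V := A^o) hd I.
  split.
  - by exists (fun _ => 0); rewrite big1 // => i _; rewrite mul0r.
  - move=> a b [t1 ->] [t2 ->]; exists (fun i => t1 i - t2 i).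
    by rewrite -sumrB; apply: eq_bigr => i _; rewrite mulrBl.
  - move=> a x [t1 ->]; exists (fun i => a * t1 i).
    by rewrite [_ *: _]mulr_sumr; apply: eq_bigr => i _; rewrite mulrA.
  - by move=> x n hx; apply: hI.
have hfg : exists (n : nat) (g : 'I_n -> A^o), (forall j, I (g j)) /\
    forall x, I x -> exists a : 'I_n -> A^o, x = \sum_j a j * g j.
  exists #|K|, (fun j => p (enum_val j)); split.
    move=> j; exists (fun i => (i == enum_val j)%:R).
    rewrite (bigD1 (enum_val j)) //= eqxx mul1r big1 ?addr0 // => i /negPf ->.
    by rewrite mul0r.
  move=> x [t ->]; exists (fun j => t (enum_val j)).
  rewrite -(big_enum_val (A := predT) (fun i => t i * p i)).
  by apply: eq_bigl => i; rewrite inE.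
have := hcoh I (gsub_graded gI) hfg.
move=> [n' [g [cc [hg [hsp [m [r [bb [hr [hrel hgen]]]]]]]]]].
have hbeta : forall j, exists b : K -> A, g j = \sum_i b i * p i.
  by move=> j; have [Ig _] := hg j; exact: Ig.
pose beta j := proj1_sig (cid (hbeta j)).
have ebeta : forall j, g j = \sum_i beta j i * p i.
  by move=> j; rewrite /beta; case: (cid _).
have halpha : forall i, exists a : 'I_n' -> A, p i = \sum_j a j * g j.
  move=> i; have Ipi : I (p i).
    exists (fun k => (k == i)%:R).
    rewrite (bigD1 i) //= eqxx mul1r big1 ?addr0 // => k /negPf ->; by rewrite mul0r.
  by have [a ea] := hsp (p i) Ipi; exists a.
pose alpha i := proj1_sig (cid (halpha i)).
have ealpha : forall i, p i = \sum_j alpha i j * g j.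
  by move=> i; rewrite /alpha; case: (cid _).
pose z (l : 'I_m + K) (i : K) : A :=
  match l with
  | inl k => \sum_j r k j * beta j i
  | inr i0 => (i0 == i)%:R - \sum_j alpha i0 j * beta j i
  end.
exists ('I_m + K)%type, z; split.
- case=> [k|i0] /=.
  + rewrite sum_mulA -[RHS](hrel k); apply: eq_bigr => j _.
    by rewrite ebeta scaler_sumr; apply: eq_bigr => i _; rewrite -mulrA.
  + rewrite (eq_bigr (fun i => (i0 == i)%:R * p i - (\sum_j alpha i0 j * beta j i) * p i));
      last by move=> i _; rewrite mulrBl.
    rewrite sumrB (bigD1 i0) //= eqxx mul1r big1 ?addr0; last first.
      by move=> i /negPf; rewrite eq_sym => ->; rewrite mul0r.
    rewrite sum_mulA {1}ealpha; apply/eqP; rewrite subr_eq0; apply/eqP.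
    apply: eq_bigr => j _; rewrite ebeta mulr_sumr; apply: eq_bigr => i _; by rewrite mulrA.
- move=> t ht.
  pose a j := \sum_i t i * alpha i j.
  have ha : \sum_j a j *: g j = 0.
    transitivity (\sum_i t i * p i); last exact: ht.
    change (\sum_j (\sum_i t i * alpha i j) * g j = \sum_i t i * p i).
    rewrite sum_mulA; apply: eq_bigr => i _.
    by rewrite ealpha mulr_sumr; apply: eq_bigr => j _; rewrite mulrA.
  have [s hs] := hgen a ha.
  exists (fun l => match l with inl k => s k | inr i0 => t i0 end) => i.
  rewrite big_sumType /=.
  have e0 : \sum_i0 t i0 * ((i0 == i)%:R - \sum_(j < n') alpha i0 j * beta j i) =
     t i - \sum_i0 t i0 * \sum_(j < n') alpha i0 j * beta j i.
    rewrite -sum_delta -sumrB; apply: eq_bigr => i0 _; by rewrite mulrBr.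
  rewrite e0.
  have e1 : \sum_i0 t i0 * (\sum_j alpha i0 j * beta j i) = \sum_j a j * beta j i.
    rewrite /a; under [RHS]eq_bigr do rewrite mulr_suml.
    rewrite exchange_big /=; apply: eq_bigr => i0 _; rewrite mulr_sumr.
    by apply: eq_bigr => j _; rewrite mulrA.
  have e2 : \sum_k s k * (\sum_j r k j * beta j i) = \sum_j a j * beta j i.
    under [RHS]eq_bigr do rewrite hs mulr_suml.
    rewrite exchange_big /=; apply: eq_bigr => k _; rewrite mulr_sumr.
    by apply: eq_bigr => j _; rewrite mulrA.
  by rewrite e1 e2 addrC subrK.
Qed.
End Coh.

Section Coh2.
Variables (A : comNzRingType) (GA : int -> pred A) (hA : pos_graded_ring GA)
  (hcoh : gr_coherent GA).
Let hd := hAd hA.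

Lemma sum_swap2 (I L : finType) (f : L -> A) (g : L -> I -> A) (h : I -> A) :
  \sum_i (\sum_l f l * g l i) * h i = \sum_l f l * (\sum_i g l i * h i).
Proof.
rewrite sum_mulA; apply: eq_bigr => l _; rewrite mulr_sumr.
by apply: eq_bigr => i _; rewrite mulrA.
Qed.

Lemma ord_cases n (j : 'I_n.+1) : j = ord_max \/ exists j' : 'I_n, j = widen_ord (leqnSn n) j'.
Proof.
case: (ltnP j n) => hj.
  by right; exists (Ordinal hj); apply: val_inj.
left; apply: val_inj => /=; have := ltn_ord j; rewrite ltnS => h.
by apply/eqP; rewrite eqn_leq h hj.
Qed.

Lemma syz_gen n : forall (K : finType) (w : K -> 'I_n -> A) (c : 'I_n -> int),
  gspan hA w c -> syz_fg w.
Proof.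
elim: n => [|n IH] K w c gw.
  exists K, (fun l i => (l == i)%:R); split; first by move=> l; case.
  by move=> t _; exists t => i; rewrite sum_delta.
pose p i := w i ord_max.
have hI : forall a dl, (exists t : K -> A, a = \sum_i t i * p i) ->
        exists t' : K -> A, comp hd dl a = \sum_i t' i * p i.
  move=> a dl [t ea].
  have hv : inspan w (fun j => \sum_i t i * w i j) by exists t.
  have [t' ht'] := gw _ hv (dl + c ord_max).
  by exists t'; rewrite -ht' addrK ea.
have [J1 [z1 [hz1 gz1]]] := ideal_syz hcoh hI.
pose wid (j' : 'I_n) := widen_ord (leqnSn n) j'.
pose u (l : J1) (j' : 'I_n) := \sum_i z1 l i * w i (wid j').
pose c' j' := c (wid j').
have gu : gspan hA u c'.
  move=> v [s hs] dl.
  pose T i := \sum_l s l * z1 l i.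
  have hV : inspan w (fun j => \sum_i T i * w i j) by exists T.
  have [t' ht'] := gw _ hV dl.
  have Vmax : \sum_i T i * w i ord_max = 0.
    by rewrite /T sum_swap2 big1 // => l _; rewrite hz1 mulr0.
  have st' : \sum_i t' i * p i = 0.
    by rewrite -(ht' ord_max) /= Vmax comp0.
  have [s' hs'] := gz1 t' st'.
  exists s' => j'.
  rewrite /c' hs.
  have -> : \sum_l s l * u l j' = \sum_i T i * w i (wid j').
    by rewrite /T sum_swap2.
  rewrite (ht' (wid j')).
  transitivity (\sum_i (\sum_l s' l * z1 l i) * w i (wid j')).
    by apply: eq_bigr => i _; rewrite -hs'.
  by rewrite sum_swap2.
have [J2 [z2 [hz2 gz2]]] := IH J1 u c' gu.
exists J2, (fun l2 i => \sum_l1 z2 l2 l1 * z1 l1 i); split.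
  move=> l2 j; case: (ord_cases j) => [->|[j' ->]].
    by rewrite sum_swap2 big1 // => l1 _; rewrite hz1 mulr0.
  by rewrite sum_swap2; apply: hz2.
move=> t ht.
have [s hs] := gz1 t (ht ord_max).
have ss : syz u s.
  move=> j'; transitivity (\sum_i t i * w i (wid j')); last exact: ht.
  transitivity (\sum_i (\sum_l s l * z1 l i) * w i (wid j')); first by rewrite sum_swap2.
  by apply: eq_bigr => i _; rewrite -hs.
have [s' hs'] := gz2 s ss.
exists s' => i; rewrite hs.
transitivity (\sum_l1 (\sum_l2 s' l2 * z2 l2 l1) * z1 l1 i).
  by apply: eq_bigr => l1 _; rewrite -hs'.
by rewrite sum_swap2.
Qed.
End Coh2.

Section Coh3.
Variables (A : comNzRingType) (GA : int -> pred A) (hA : pos_graded_ring GA)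
  (hcoh : gr_coherent GA).
Let hd := hAd hA.

Lemma sum_unit (F : unit -> A) : \sum_(i : unit) F i = F tt.
Proof. by rewrite (big_pred1 tt) // => -[]. Qed.

Lemma hom_gspan (K : finType) n (w : K -> 'I_n -> A) (c : 'I_n -> int) (deg : K -> int) :
  (forall i j, w i j \in GA (deg i - c j)) -> gspan hA w c.
Proof.
move=> hw v [t ht] dl; exists (fun i => comp hd (dl - deg i) (t i)) => j.
rewrite ht comp_sum; apply: eq_bigr => i _.
rewrite (compMr hA _ _ (hw i j)); congr (comp _ _ _ * _); lia.
Qed.

Lemma fp_ann_fg (M : lmodType A) (GM : int -> pred M) (hM : graded_module GA GM)
  (hfp : gr_fin_pres GA GM) : ann_fg_prop GM.
Proof.
move=> m0 j0 hm0.
have [n [g [cc [hg [hsp [m [r [bb [hr [hrel hgen]]]]]]]]]] := hfp.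
have [a ea] := hsp m0 I.
pose a' j := comp hd (j0 - cc j) (a j).
have ea' : m0 = \sum_j a' j *: g j.
  rewrite -(compGG (hVd hM) hm0) {1}ea comp_sum; apply: eq_bigr => j _.
  by rewrite (compZr hA hM _ _ (hg j).2).
pose K := (unit + 'I_m)%type.
pose w (i : K) : 'I_n -> A := match i with inl _ => a' | inr k => r k end.
pose deg (i : K) : int := match i with inl _ => j0 | inr k => bb k end.
have hw : forall i j, w i j \in GA (deg i - cc j).
  by case=> [_|k] j /=; [apply: comp_in | apply: hr].
have [J [z [hz gz]]] := syz_gen hcoh (hom_gspan hw).
exists J, (fun l => z l (inl tt)); split.
  move=> l.
  have hzl : forall j, z l (inl tt) * a' j = - \sum_k z l (inr k) * r k j.
    move=> j; apply/eqP; rewrite -addr_eq0; apply/eqP.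
    by have := hz l j; rewrite big_sumType /= sum_unit.
  rewrite ea' scaler_sumr.
  under eq_bigr do rewrite scalerA hzl scaleNr scaler_suml.
  rewrite sumrN exchange_big /= big1 ?oppr0 // => k _.
  by under eq_bigr do rewrite -scalerA; rewrite -scaler_sumr hrel scaler0.
move=> rr hrr.
have h0 : \sum_j (rr * a' j) *: g j = 0.
  transitivity (rr *: m0); last exact: hrr.
  by rewrite [in RHS]ea' scaler_sumr; apply: eq_bigr => j _; rewrite scalerA.
have [t ht] := hgen _ h0.
pose tau (i : K) : A := match i with inl _ => rr | inr k => - t k end.
have stau : syz w tau.
  move=> j; rewrite big_sumType /= sum_unit /= ht.
  by rewrite -big_split big1 // => k _; rewrite /= -mulrDl subrr mul0r.
have [s hs] := gz tau stau.
by exists s; have := hs (inl tt).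
Qed.
End Coh3.

Theorem theorem3p9' (A : comNzRingType) (GA : int -> pred A)
  (hA : pos_graded_ring GA) (hcoh : gr_coherent GA)
  (E : lmodType A) (GE : int -> pred E) (hE : graded_module GA GE)
  (hinj : gr_injective GA GE) (hind : gr_indecomposable GE)
  (EP : lmodType A) (GEP : int -> pred EP)
  (hEP : gr_injective_hull_of_quotient GA (P_of GE) GEP) :
  forall (M : lmodType A) (GM : int -> pred M),
    graded_module GA GM -> gr_fin_pres GA GM ->
    (gHom_nonzero GM GE <-> gHom_nonzero GM GEP).
Proof.
move=> M GM hM hfp.
exact: (main_given hA hE hinj hind hEP hM (fp_ann_fg hA hcoh hM hfp)).
Qed.

Unset Implicit Arguments.

Theorem theorem3p9 (A : comNzRingType) (GA : int -> pred A)
  (hA : pos_graded_ring GA) (hcoh : gr_coherent GA)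
  (E : lmodType A) (GE : int -> pred E) (hE : graded_module GA GE)
  (hinj : gr_injective GA GE) (hind : gr_indecomposable GE)
  (EP : lmodType A) (GEP : int -> pred EP)
  (hEP : gr_injective_hull_of_quotient GA (P_of GE) GEP) :
  forall (M : lmodType A) (GM : int -> pred M),
    graded_module GA GM -> gr_fin_pres GA GM ->
    (gHom_nonzero GM GE <-> gHom_nonzero GM GEP).
Proof.
exact: theorem3p9'.
Qed.
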